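(* Let $G_1$ and $G_2$ be two disjoint $(k+1)$-critical hypergraphs with $k\ge2$, let $\tilde e\in E(G_1)$ be an ordinary edge (i.e. $|\tilde e|=2$), let $\tilde v\in V(G_2)$ be arbitrary, and let $s$ be an admissible map for $(\tilde e,G_2,\tilde v)$. Let $G=S(G_1,\tilde e,G_2,\tilde v,s)$ and $G_2'=G[(V(G_2)\setminus\{\tilde v\})\cup\tilde e]$. If $\chi(G_2')\le k$, then $G$ is $(k+1)$-critical and $\tilde e$ is a separating vertex set of $G$ of size $2$.
   Context: A hypergraph is a pair $G=(V,E)$ of finite sets with $E\subseteq 2^V$ and $|e|\ge2$ for all $e\in E$. A coloring requires every edge to contain two vertices of different colors; $\chi$ is the chromatic number. $G$ is $(k+1)$-critical if $\chi(G)=k+1$ but $\chi(H)\le k$ for every proper subhypergraph $H$. $G[X]$ has vertex set $X$ and the edges of $G$ contained in $X$. $\partial_G(v)$ is the set of edges containing $v$. A set $S\subseteq V(G)$ is a separating vertex set if $G$ is the union of two induced subhypergraphs $G_1,G_2$ with $V(G_1)\cap V(G_2)=S$ and $|V(G_i)|>|S|$. Splitting: let $G_1,G_2$ be disjoint hypergraphs, $\tilde e\in E(G_1)$, $\tilde v\in V(G_2)$, and $s:\partial_{G_2}(\tilde v)\to 2^{\tilde e}$ a map (called admissible) with $s(e)\ne\varnothing$ for all $e$ and $\bigcup_{e}s(e)=\tilde e$. Then $S(G_1,\tilde e,G_2,\tilde v,s)$ is the hypergraph with vertex set $V(G_1)\cup(V(G_2)\setminus\{\tilde v\})$ and edge set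 $(E(G_1)\setminus\{\tilde e\})\cup(E(G_2)\setminus\partial_{G_2}(\tilde v))\cup\{(e\setminus\{\tilde v\})\cup s(e): e\in\partial_{G_2}(\tilde v)\}$. *)

(* Defs.v *)
From mathcomp Require Import all_boot.
Set Implicit Arguments. Unset Strict Implicit. Unset Printing Implicit Defensive.

Record hgraph (T : finType) := HG { hV : {set T}; hE : {set {set T}} }.

Section Hyper.
Variable T : finType.

Definition is_hypergraph (G : hgraph T) : Prop :=
  forall e, e \in hE G -> e \subset hV G /\ 2 <= #|e|.

Definition coloring (G : hgraph T) (k : nat) (f : T -> nat) : Prop :=
  (forall x, x \in hV G -> f x < k) /\
  (forall e, e \in hE G -> exists x y, [/\ x \in e, y \in e & f x != f y]).

Definition colorable (G : hgraph T) (k : nat) : Prop := exists f, coloring G k f.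

Definition chi_eq (G : hgraph T) (n : nat) : Prop :=
  colorable G n /\ forall m, m < n -> ~ colorable G m.

Definition subhypergraph (H G : hgraph T) : Prop :=
  is_hypergraph H /\ hV H \subset hV G /\ hE H \subset hE G.

Definition proper_subhypergraph (H G : hgraph T) : Prop :=
  subhypergraph H G /\ H <> G.

Definition critical (n : nat) (G : hgraph T) : Prop :=
  chi_eq G n /\ forall H, proper_subhypergraph H G -> colorable H n.-1.

Definition induced (G : hgraph T) (X : {set T}) : hgraph T :=
  HG X [set e in hE G | e \subset X].

Definition star (G : hgraph T) (v : T) : {set {set T}} :=
  [set e in hE G | v \in e].

(* s : ∂_{G2}(v) -> 2^e~ admissible (values outside ∂_{G2}(v) are irrelevant) *)
Definition admissible (et : {set T}) (G2 : hgraph T) (vt : T)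
  (s : {set T} -> {set T}) : Prop :=
  (forall e, e \in star G2 vt -> s e != set0 /\ s e \subset et) /\
  \bigcup_(e in star G2 vt) s e = et.

Definition splitting (G1 : hgraph T) (et : {set T}) (G2 : hgraph T) (vt : T)
  (s : {set T} -> {set T}) : hgraph T :=
  HG (hV G1 :|: (hV G2 :\ vt))
     ((hE G1 :\ et) :|: (hE G2 :\: star G2 vt)
        :|: [set (e :\ vt) :|: s e | e in star G2 vt]).

Definition separating (G : hgraph T) (S : {set T}) : Prop :=
  exists X1 X2 : {set T},
    [/\ hV G = X1 :|: X2,
        hE G = hE (induced G X1) :|: hE (induced G X2),
        X1 :&: X2 = S,
        #|S| < #|X1| & #|S| < #|X2|].

End Hyper.

(* Main.v *)
Require Import Defs.
From mathcomp Require Import all_boot.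
Set Implicit Arguments. Unset Strict Implicit. Unset Printing Implicit Defensive.

Section Gen.
Variable T : finType.
Implicit Types G H : hgraph T.

Definition deledge G (e : {set T}) := HG (hV G) (hE G :\ e).

Lemma coloring_sub G H k f : hV H \subset hV G -> hE H \subset hE G ->
  coloring G k f -> coloring H k f.
Proof.
move=> sV sE [c1 c2]; split=> [x xH|e eH]; first exact/c1/(subsetP sV).
exact/c2/(subsetP sE).
Qed.

Lemma colorable_mono G m n : m <= n -> colorable G m -> colorable G n.
Proof.
move=> mn [f [c1 c2]]; exists f; split=> // x xG; exact: leq_trans (c1 x xG) mn.
Qed.

Lemma deledge_proper G e : is_hypergraph G -> e \in hE G ->
  proper_subhypergraph (deledge G e) G.
Proof.
move=> hG eG; split; first split.
- by move=> e' /setD1P [_ /hG].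
- by split=> //=; apply/subsetP=> z /setD1P [].
move=> E; have : e \in hE (deledge G e) by rewrite E.
by rewrite /= !inE eqxx.
Qed.

Lemma crit_notcol k G : critical k.+1 G -> ~ colorable G k.
Proof. by case=> [[_ h] _]; apply: h. Qed.

Lemma crit_del k G e : is_hypergraph G -> critical k.+1 G -> e \in hE G ->
  colorable (deledge G e) k.
Proof. by move=> hG [_ h] eG; apply: h; apply: deledge_proper. Qed.

Lemma crit_cover k G v : 0 < k -> is_hypergraph G -> critical k.+1 G ->
  v \in hV G -> exists2 e, e \in hE G & v \in e.
Proof.
move=> k0 hG cG vG.
case: (boolP [exists e, (e \in hE G) && (v \in e)]) => [/existsP [e /andP [eG ve]]|H0].
  by exists e.
exfalso.
have nv : forall e, e \in hE G -> v \notin e.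
  by move=> e eG; apply/negP=> ve; move/negP: H0; apply; apply/existsP; exists e; rewrite eG.
have hH : is_hypergraph (HG (hV G :\ v) (hE G)).
  move=> e /= eG; have [s1 s2] := hG e eG; split=> //.
  by apply/subsetP=> z ze; rewrite !inE (subsetP s1 _ ze) andbT;
     apply: contraNneq (nv e eG) => <-.
have [f [c1 c2]] : colorable (HG (hV G :\ v) (hE G)) k.
  case: cG => _ h; apply: h; split; first by split=> //=; split=> //; exact: subD1set.
  move/(f_equal (@hV T)) => /= E; have := vG; by rewrite -E !inE eqxx.
apply: (crit_notcol cG); exists (fun z => if z == v then 0 else f z); split.
  move=> x xG; case: eqP => // /eqP xv; apply: c1; by rewrite /= !inE xv.
move=> e eG; have [x [y [xe ye fxy]]] := c2 e eG; exists x, y; split=> //.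
have nve := nv e eG.
have xv : x != v by apply: contraNneq nve => <-.
have yv : y != v by apply: contraNneq nve => <-.
by rewrite (negbTE xv) (negbTE yv).
Qed.

Lemma make_crit k G : 0 < k -> is_hypergraph G -> ~ colorable G k ->
  (forall e, e \in hE G -> colorable (deledge G e) k) ->
  (forall v, v \in hV G -> exists2 e, e \in hE G & v \in e) -> critical k.+1 G.
Proof.
move=> k0 hG nc dc cov; split; first split.
- have [e0 e0G] : exists e0, e0 \in hE G.
    case: (boolP [exists e, e \in hE G]) => [/existsP [e eG]|H0]; first by exists e.
    exfalso; apply: nc; exists (fun=> 0); split=> //.
    by move=> e eG; move/negP: H0; case; apply/existsP; exists e.
  have [f [c1 c2]] := dc e0 e0G.
  have [s1 s2] := hG e0 e0G.
  have [v ve0] : exists v, v \in e0.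
    by apply/set0Pn; apply: contraTneq s2 => ->; rewrite cards0.
  exists (fun z => if z == v then k else f z); split.
    move=> x xG; case: eqP => // _; apply: leq_trans (c1 x xG) _; exact: leqnSn.
  move=> e eG; case: (boolP (v \in e)) => ve.
    have [s1' s2'] := hG e eG.
    have [w /andP [wv we]] : exists w, (w != v) && (w \in e).
      apply/existsP; move: s2'; apply: contraLR; rewrite negb_exists => /forallP H.
      have : e \subset [set v] by apply/subsetP=> z ze; move: (H z); rewrite ze andbT negbK inE.
      by move/subset_leq_card; rewrite cards1 -ltnNge ltnS.
    exists v, w; rewrite eqxx (negbTE wv); split=> //.
    by rewrite eq_sym neq_ltn (c1 w (subsetP s1' _ we)).
  have ee0 : e \in hE G :\ e0 by rewrite !inE eG andbT; apply: contraNneq ve => ->.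
  have [x [y [xe ye fxy]]] := c2 e ee0; exists x, y; split=> //.
  have xv : x != v by apply: contraNneq ve => <-.
  have yv : y != v by apply: contraNneq ve => <-.
  by rewrite (negbTE xv) (negbTE yv).
- by move=> m mk cm; apply: nc; apply: colorable_mono cm; rewrite -ltnS.
move=> H [[hH [sV sE]] nHG].
have [e0 e0G e0H] : exists2 e0, e0 \in hE G & e0 \notin hE H.
  case: (boolP [exists e0 in hE G, e0 \notin hE H]) => [/exists_inP [e0 ? ?]|H0].
    by exists e0.
  exfalso; apply: nHG.
  have EE : hE H = hE G.
    apply/eqP; rewrite eqEsubset sE /=; apply/subsetP=> e eG.
    by apply/negPn; apply: contra H0 => eH; apply/exists_inP; exists e.
  have VV : hV H = hV G.
    apply/eqP; rewrite eqEsubset sV /=; apply/subsetP=> v vG.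
    have [e eG ve] := cov v vG; rewrite -EE in eG; have [s1 _] := hH e eG.
    exact: (subsetP s1).
  by case: H hH sV sE EE VV {H0} => ? ? /= _ _ _ -> ->; case: G {hG nc dc cov}.
have [f cf] := dc e0 e0G; exists f; apply: coloring_sub cf => //=.
apply/subsetP=> e eH; rewrite !inE (subsetP sE _ eH) andbT.
by apply: contraNneq e0H => <-.
Qed.

Definition sw (u v z : nat) := if z == u then v else if z == v then u else z.

Lemma swK u v : involutive (sw u v).
Proof.
move=> z; rewrite /sw; case: (z =P u) => [->|zu].
  by case: (v =P u) => [->|]; rewrite ?eqxx.
case: (z =P v) => [->|zv]; first by rewrite eqxx.
by move/eqP: zu => /negbTE ->; move/eqP: zv => /negbTE ->.
Qed.

Lemma sw_ne u v z : z != u -> z != v -> sw u v z = z.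
Proof. by rewrite /sw => /negbTE -> /negbTE ->. Qed.

Lemma sw_lt u v z k : u < k -> v < k -> z < k -> sw u v z < k.
Proof. by rewrite /sw; case: (z == u); case: (z == v). Qed.

Lemma coloring_perm G k f p : (forall z, z < k -> p z < k) -> injective p ->
  coloring G k f -> coloring G k (p \o f).
Proof.
move=> pk pi [c1 c2]; split=> [x xG|e eG]; first exact/pk/c1.
have [x [y [xe ye fxy]]] := c2 e eG; exists x, y; split=> //=.
by rewrite (inj_eq pi).
Qed.

Lemma perm1 k a p : a < k -> p < k -> exists pi : nat -> nat,
  [/\ forall z, z < k -> pi z < k, injective pi & pi a = p].
Proof.
move=> ak pk; exists (sw a p); split; first by move=> z; apply: sw_lt.
  exact: can_inj (swK a p).
by rewrite /sw eqxx.
Qed.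

Lemma perm2 k a b p q : a < k -> b < k -> p < k -> q < k -> a != b -> p != q ->
  exists pi : nat -> nat,
  [/\ forall z, z < k -> pi z < k, injective pi, pi a = p & pi b = q].
Proof.
move=> ak bk pk qk ab pq; set b' := sw a p b.
exists (sw b' q \o sw a p); split.
- by move=> z zk /=; apply: sw_lt => //; apply: sw_lt.
- by apply: inj_comp; apply: can_inj (swK _ _).
- have e1 : sw a p a = p by rewrite /sw eqxx.
  rewrite /= e1.
  have pb : p != b'.
    have -> : p = sw a p a by rewrite /sw eqxx.
    by rewrite (inj_eq (can_inj (swK a p))).
  by rewrite sw_ne.
- by rewrite /= -/b' /sw eqxx.
Qed.
End Gen.
Unset Implicit Arguments.

Section Main.
Variables (T : finType) (k : nat) (G1 G2 : hgraph T) (et : {set T}) (vt : T)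
  (s : {set T} -> {set T}).
Hypotheses (k2 : 2 <= k) (h1 : is_hypergraph G1) (h2 : is_hypergraph G2)
  (dis : [disjoint hV G1 & hV G2]) (c1 : critical k.+1 G1) (c2 : critical k.+1 G2)
  (etG : et \in hE G1) (vtG : vt \in hV G2) (adm : admissible et G2 vt s).
Variables x y : T.
Hypotheses (xy : x != y) (etxy : et = [set x; y]).

Local Notation G := (splitting G1 et G2 vt s).
Local Notation X2 := ((hV G2 :\ vt) :|: et).
Local Notation sp e := ((e :\ vt) :|: s e).

Lemma etV1 z : z \in et -> z \in hV G1.
Proof. by have [/subsetP S _] := h1 et etG; apply: S. Qed.

Lemma disF z : z \in hV G1 -> (z \in hV G2) = false.
Proof. exact: disjointFr. Qed.

Lemma etxyP z : z \in et -> z = x \/ z = y.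
Proof. by rewrite etxy !inE => /orP [/eqP|/eqP]; [left|right]. Qed.

Lemma xet : x \in et. Proof. by rewrite etxy !inE eqxx. Qed.
Lemma yet : y \in et. Proof. by rewrite etxy !inE eqxx orbT. Qed.

Lemma inVG z : (z \in hV G) = (z \in hV G1) || (z \in hV G2 :\ vt).
Proof. by rewrite /splitting inE. Qed.

Lemma starP e : (e \in star G2 vt) = (e \in hE G2) && (vt \in e).
Proof. by rewrite /star inE. Qed.

Lemma seP e : e \in star G2 vt -> [/\ s e != set0, s e \subset et & e \in hE G2].
Proof. by move=> es; have [a b] := (adm.1 e es); move: es; rewrite starP => /andP [? _]. Qed.

Lemma edgeP e0 : e0 \in hE G ->
  [\/ (e0 \in hE G1 /\ e0 != et), (e0 \in hE G2 /\ vt \notin e0)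
    | exists2 e, e \in star G2 vt & e0 = sp e].
Proof.
rewrite /splitting /= !inE => /orP [/orP [/andP [ne eG1] | /andP [nst eG2]] | /imsetP [e es ->]].
- by apply: Or31.
- by apply: Or32; split=> //; move: nst; rewrite eG2.
- by apply: Or33; exists e.
Qed.

Lemma edge1 e0 : e0 \in hE G1 -> e0 != et -> e0 \in hE G.
Proof. by move=> a b; rewrite /splitting /= !inE a b. Qed.

Lemma edge2 e0 : e0 \in hE G2 -> vt \notin e0 -> e0 \in hE G.
Proof. by move=> a b; rewrite /splitting /= !inE a (negbTE b) orbT. Qed.

Lemma edge3 e : e \in star G2 vt -> sp e \in hE G.
Proof. by move=> es; rewrite /splitting /= inE; apply/orP; right; apply/imsetP; exists e. Qed.

Lemma sub2 e : e \in hE G2 -> vt \notin e -> e \subset X2.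
Proof.
move=> eG ve; have [/subsetP S _] := h2 e eG; apply/subsetP=> z ze.
by rewrite !inE S // andbT; apply/orP; left; apply: contraNneq ve => <-.
Qed.

Lemma sub3 e : e \in star G2 vt -> sp e \subset X2.
Proof.
move=> es; have [_ /subsetP se eG] := seP _ es; have [/subsetP S _] := h2 e eG.
apply/subsetP=> z; rewrite !inE => /orP [/andP [zv ze]|zs].
  by rewrite zv S.
by rewrite se ?orbT.
Qed.

Lemma X2VG z : z \in X2 -> z \in hV G.
Proof. by rewrite inVG !inE => /orP [->|/etV1 ->]; rewrite ?orbT. Qed.

Lemma X2V1 z : z \in X2 -> z \in hV G1 -> z \in et.
Proof. by rewrite !inE => /orP [/andP [_ z2] /disF|//]; rewrite z2. Qed.

Lemma transfer (A B : {set T}) (F H : T -> nat) :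
  (forall a, a \in A -> exists2 b, b \in B & H b = F a) ->
  (exists u w, [/\ u \in A, w \in A & F u != F w]) ->
  exists u w, [/\ u \in B, w \in B & H u != H w].
Proof.
move=> tr [u [w [uA wA ne]]]; have [b1 b1B e1] := tr u uA; have [b2 b2B e2] := tr w wA.
by exists b1, b2; rewrite e1 e2.
Qed.

Lemma hypG : is_hypergraph G.
Proof.
move=> e0 /edgeP [[eG1 ne]|[eG2 ve]|[e es ->]].
- have [S c] := h1 e0 eG1; split=> //; apply/subsetP=> z /(subsetP S) z1.
  by rewrite inVG z1.
- have [_ c] := h2 e0 eG2; split=> //; apply/subsetP=> z /(subsetP (sub2 _ eG2 ve)).
  exact: X2VG.
- split; first by apply/subsetP=> z /(subsetP (sub3 _ es)); exact: X2VG.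
  have [sn sse eG] := seP _ es; have [S c] := h2 e eG.
  have : 0 < #|e :\ vt|.
    by move: c; rewrite (cardsD1 vt e); move: es; rewrite starP => /andP [_ ->].
  rewrite card_gt0 => /set0Pn [u uev].
  have [w ws] := set0Pn _ sn.
  have uw : u != w.
    have w1 := etV1 _ (subsetP sse _ ws).
    have u2 : u \in hV G2 by move: uev; rewrite !inE => /andP [_ /(subsetP S)].
    by apply: contraTneq u2 => ->; rewrite disF.
  have <- : #|[set u; w]| = 2 by rewrite cards2 uw.
  apply: subset_leq_card; apply/subsetP=> z; rewrite !inE => /orP [/eqP->|/eqP->].
    by move: uev; rewrite !inE => ->.
  by rewrite ws orbT.
Qed.


Lemma glue2 h : h x < k -> h x = h y ->
  (forall z, z \in hV G2 :\ vt -> h z < k) ->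
  (forall e0, e0 \in hE G -> e0 \subset X2 ->
     exists u w, [/\ u \in e0, w \in e0 & h u != h w]) ->
  colorable G2 k.
Proof.
move=> hxk hxy hk hE2.
exists (fun z => if z == vt then h x else h z); split.
  move=> z z2; case: eqP => // /eqP zv; apply: hk; by rewrite !inE zv.
move=> e eG; case: (boolP (vt \in e)) => ve.
  have es : e \in star G2 vt by rewrite starP eG ve.
  have [_ sse _] := seP _ es.
  apply: transfer (hE2 _ (edge3 _ es) (sub3 _ es)) => z; rewrite !inE => /orP [/andP [zv ze]|zs].
    by exists z => //; rewrite (negbTE zv).
  exists vt; rewrite ?eqxx //.
  by case: (etxyP _ (subsetP sse _ zs)) => ->.
apply: transfer (hE2 _ (edge2 _ eG ve) (sub2 _ eG ve)) => z ze.
exists z => //; have -> // : (z == vt) = false.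
by apply/negP => /eqP zv; move: ve; rewrite -zv ze.
Qed.

Lemma notcolG : ~ colorable G k.
Proof.
move=> [h [hV hE]].
have hxk : h x < k by apply: hV; rewrite inVG etV1 ?xet.
case: (eqVneq (h x) (h y)) => [hxy|hxy].
  apply: (crit_notcol c2); apply: (glue2 _ hxk hxy).
    by move=> z z2; apply: hV; rewrite inVG z2 orbT.
  by move=> e0 e0G _; apply: hE.
apply: (crit_notcol c1); exists h; split.
  by move=> z z1; apply: hV; rewrite inVG z1.
move=> e eG; case: (eqVneq e et) => [->|ne]; last exact/hE/edge1.
by exists x, y; rewrite xet yet.
Qed.

Lemma glue1 e f g : e \in hE G2 -> coloring (deledge G2 e) k g ->
  coloring (deledge G1 et) k f -> f x = g vt -> f y = g vt ->
  forall e0, e0 \in hE G -> e0 != e -> (vt \in e -> e0 != sp e) ->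
  exists u w, [/\ u \in e0, w \in e0 &
    (if u \in hV G1 then f u else g u) != (if w \in hV G1 then f w else g w)].
Proof.
move=> eG [gV gE] [fV fE] fx fy e0 /edgeP [[e1 net]|[e2 nve]|[e' es ->]] ne ne'.
- have [S _] := h1 e0 e1.
  have [u [w [ue we fuw]]] := fE e0 (introT setD1P (conj net e1)).
  by exists u, w; rewrite (subsetP S _ ue) (subsetP S _ we).
- have [S _] := h2 e0 e2.
  apply: transfer (gE e0 (introT setD1P (conj ne e2))) => z ze; exists z => //.
  by rewrite (disjointFl dis (subsetP S _ ze)).
- have [sn sse e'G] := seP _ es.
  have ee : e' != e.
    case: (boolP (vt \in e)) => ve; first by apply: contraNneq (ne' ve) => ->.
    by apply: contraNneq ve => <-; move: es; rewrite starP => /andP [].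
  apply: transfer (gE e' (introT setD1P (conj ee e'G))) => z ze.
  case: (eqVneq z vt) => [->|zv].
    have [w ws] := set0Pn _ sn; exists w; first by rewrite inE ws orbT.
    have wet := subsetP sse _ ws; rewrite etV1 //.
    by case: (etxyP _ wet) => ->.
  exists z; first by rewrite !inE zv ze.
  have [S _] := h2 e' e'G.
  by rewrite (disjointFl dis (subsetP S _ ze)).
Qed.

Lemma vtnG : vt \notin hV G.
Proof. rewrite inVG !inE eqxx /= orbF; apply/negP => H; move: (disF _ H); by rewrite vtG. Qed.

Lemma vtnE e0 : e0 \in hE G -> vt \notin e0.
Proof.
move=> e0G; have [S _] := hypG e0 e0G; apply: contra vtnG; exact: (subsetP S).
Qed.

Lemma delG2 e : e \in hE G2 -> forall e0, e0 \in hE G ->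
  (forall e0', e0' \in hE G -> e0' != e0 -> e0' != e /\ (vt \in e -> e0' != sp e)) ->
  colorable (deledge G e0) k.
Proof.
move=> eG e0 e0G cond.
have [g cg] := crit_del h2 c2 eG.
have gvt : g vt < k by apply: cg.1.
have [f' [fV fE]] := crit_del h1 c1 etG.
have f'x : f' x < k by apply: fV; rewrite /= etV1 // xet.
have fxy : f' x = f' y.
  case: (eqVneq (f' x) (f' y)) => // nxy; exfalso.
  apply: (crit_notcol c1); exists f'; split=> //.
  move=> e1 e1G; case: (eqVneq e1 et) => [->|ne]; first by exists x, y; rewrite xet yet.
  by apply: fE; rewrite /= !inE ne e1G.
have [pi [piV piI pix]] := perm1 f'x gvt.
have cf := coloring_perm piV piI (conj fV fE).
have [cgV cgE] := cg.
exists (fun z => if z \in hV G1 then (pi \o f') z else g z); split.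
  move=> z; rewrite /= inVG; case: (boolP (z \in hV G1)) => [z1 _|z1 /= z2].
    exact: cf.1.
  by apply: cgV; move: z2; rewrite inE => /andP [].
move=> e0' /setD1P [ne0 e0'G]; have [n1 n2] := cond e0' e0'G ne0.
by apply: (glue1 _ _ _ eG cg cf) => //=; rewrite -?fxy.
Qed.

Lemma inInd e0 : (e0 \in hE (induced G X2)) = (e0 \in hE G) && (e0 \subset X2).
Proof. by rewrite [in LHS]/induced [hE _]/= inE. Qed.

Lemma delG1 e0 : colorable (induced G X2) k -> e0 \in hE G1 -> e0 != et ->
  colorable (deledge G e0) k.
Proof.
move=> [g [gV gE]] e0G1 ne.
have [f' [fV fE]] := crit_del h1 c1 e0G1.
have fx : f' x < k by apply: fV; rewrite /= etV1 // xet.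
have fy : f' y < k by apply: fV; rewrite /= etV1 // yet.
have fxy : f' x != f' y.
  have [u [w [ue we fuw]]] : exists u w, [/\ u \in et, w \in et & f' u != f' w].
    by apply: fE; rewrite /= !inE etG andbT eq_sym.
  apply: contraNneq fuw => fxy.
  by case: (etxyP _ ue) => ->; case: (etxyP _ we) => ->; rewrite ?fxy.
have gx : g x < k by apply: gV; rewrite /= !inE xet orbT.
have gy : g y < k by apply: gV; rewrite /= !inE yet orbT.
have gxy : g x != g y.
  apply/negP => /eqP gxy; apply: (crit_notcol c2); apply: (glue2 _ gx gxy).
    by move=> z z2; apply: gV; rewrite /= inE z2.
  by move=> e1 e1G e1X; apply: gE; rewrite /= inE e1G e1X.
have [pi [piV piI pix piy]] := perm2 gx gy fx fy gxy fxy.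
have [cgV cgE] := coloring_perm piV piI (conj gV gE).
exists (fun z => if z \in hV G1 then f' z else (pi \o g) z); split.
  move=> z; rewrite /= inVG; case: (boolP (z \in hV G1)) => [z1 _|z1 /= z2].
    exact: fV.
  by apply: cgV; rewrite /= inE z2.
move=> e1 /setD1P [ne1 /edgeP [[e11 net]|[e2 nve]|[e' es ->]]].
- have [S _] := h1 e1 e11.
  have [u [w [ue we fuw]]] := fE e1 (introT setD1P (conj ne1 e11)).
  by exists u, w; rewrite (subsetP S _ ue) (subsetP S _ we).
- have e1G : e1 \in hE G by apply: edge2.
  have sX := sub2 _ e2 nve.
  apply: transfer (cgE e1 _); last by rewrite inInd e1G sX.
  move=> z ze; exists z => //; case: ifP => // z1.
  by case: (etxyP _ (X2V1 _ (subsetP sX _ ze) z1)) => ->.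
- have e1G := edge3 _ es.
  have sX := sub3 _ es.
  apply: transfer (cgE (sp e') _); last by rewrite inInd e1G sX.
  move=> z ze; exists z => //; case: ifP => // z1.
  by case: (etxyP _ (X2V1 _ (subsetP sX _ ze) z1)) => ->.
Qed.

Lemma delG e0 : colorable (induced G X2) k -> e0 \in hE G -> colorable (deledge G e0) k.
Proof.
move=> hG2 e0G; have := e0G; case/edgeP => [[e1 ne]|[e2 nve]|[e es E]].
- exact: delG1.
- apply: (delG2 _ e2) => // e0' _ ne0; split=> // H; by rewrite H in nve.
- have [_ _ eG] := seP _ es.
  apply: (delG2 _ eG) => // e0' e0'G ne0; split; last by move=> _; rewrite -E.
  apply: contraNneq (vtnE _ e0'G) => ->; by move: es; rewrite starP => /andP [].
Qed.

Lemma coverG v : v \in hV G -> exists2 e, e \in hE G & v \in e.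
Proof.
have k0 : 0 < k by apply: leq_trans k2.
rewrite inVG => /orP [v1|].
  have [e eG ve] := crit_cover k0 h1 c1 v1.
  case: (eqVneq e et) => [E|ne]; last by exists e => //; apply: edge1.
  have : v \in \bigcup_(e in star G2 vt) s e by rewrite adm.2 -E.
  case/bigcupP => e' es vs; exists (sp e'); first exact: edge3.
  by rewrite inE vs orbT.
rewrite inE => /andP [nv v2].
have [e eG ve] := crit_cover k0 h2 c2 v2.
case: (boolP (vt \in e)) => vte; last by exists e => //; apply: edge2.
have es : e \in star G2 vt by rewrite starP eG vte.
by exists (sp e); [exact: edge3 | rewrite !inE ve andbT; rewrite inE in nv; rewrite nv].
Qed.

Lemma critG : colorable (induced G X2) k -> critical k.+1 G.
Proof.
move=> hG2; apply: make_crit.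
- exact: leq_trans k2.
- exact: hypG.
- exact: notcolG.
- by move=> e0; apply: delG.
- exact: coverG.
Qed.

Lemma inIndX (X : {set T}) e0 : (e0 \in hE (induced G X)) = (e0 \in hE G) && (e0 \subset X).
Proof. by rewrite [in LHS]/induced [hE _]/= inE. Qed.

Lemma sepG : separating G et.
Proof.
have k0 : 0 < k by apply: leq_trans k2.
exists (hV G1), X2; split.
- apply/setP=> z; rewrite inVG !inE.
  by case: (boolP (z \in et)) => [/etV1 -> //| _]; rewrite orbF.
- apply/setP=> e0; rewrite in_setU !inIndX.
  case: (boolP (e0 \in hE G)) => //= e0G; apply/esym/orP.
  case/edgeP: e0G => [[e1 _]|[e2 nve]|[e es ->]].
  + by left; have [] := h1 e0 e1.
  + by right; apply: sub2.
  + by right; apply: sub3.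
- apply/setP=> z; rewrite !inE.
  case: (boolP (z \in et)) => [zet|_]; first by rewrite etV1 // orbT andbT.
  rewrite orbF; case: (boolP (z \in hV G1)) => //= /disF ->; by rewrite andbF.
- apply: proper_card; apply/properP; split; first by apply/subsetP; exact: etV1.
  case: (boolP [exists z, (z \in hV G1) && (z \notin et)]) => [/existsP [z /andP [? ?]]|H0].
    by exists z.
  exfalso; apply: (crit_notcol c1).
  exists (fun z => if z == x then 0 else 1); split.
    by move=> z _; case: eqP => // _; apply: leq_trans k2.
  move=> e eG; have [S c] := h1 e eG.
  have sE : e \subset et.
    apply/subsetP=> z ze; have z1 := subsetP S _ ze.
    apply/negPn/negP => zn; move/negP: H0; apply; apply/existsP; exists z; by rewrite z1 zn.
  have -> : e = et.
    apply/eqP; rewrite eqEcard sE /=; by rewrite etxy cards2 xy.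
  exists x, y; rewrite xet yet eqxx; split=> //; have -> : (y == x) = false by apply/negP => /eqP yx; move: xy; rewrite yx eqxx.
  done.
- apply: proper_card; apply/properP; split; first by apply/subsetP=> z zet; rewrite !inE zet orbT.
  have [e eG ve] := crit_cover k0 h2 c2 vtG.
  have [S c] := h2 e eG.
  have : 0 < #|e :\ vt| by move: c; rewrite (cardsD1 vt e) ve.
  rewrite card_gt0 => /set0Pn [w wev].
  have w2 : w \in hV G2 by move: wev; rewrite !inE => /andP [_ /(subsetP S)].
  exists w.
    by move: wev; rewrite !inE => /andP [-> _]; rewrite w2.
  by apply/negP => /etV1 /disF; rewrite w2.
Qed.


End Main.

Theorem theorem16 (T : finType) (k : nat) (G1 G2 : hgraph T)
  (et : {set T}) (vt : T) (s : {set T} -> {set T}) :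
  2 <= k ->
  is_hypergraph G1 -> is_hypergraph G2 ->
  [disjoint hV G1 & hV G2] ->
  critical k.+1 G1 -> critical k.+1 G2 ->
  et \in hE G1 -> #|et| = 2 ->
  vt \in hV G2 ->
  admissible et G2 vt s ->
  colorable (induced (splitting G1 et G2 vt s) ((hV G2 :\ vt) :|: et)) k ->
  critical k.+1 (splitting G1 et G2 vt s) /\
  separating (splitting G1 et G2 vt s) et /\ #|et| = 2.
Proof.
move=> k2 h1 h2 dis c1 c2 etG et2 vtG adm hG2.
have /cards2P [x [y [xy etxy]]] : #|et| == 2 by rewrite et2.
split; first exact: (@critG T k G1 G2 et vt s k2 h1 h2 dis c1 c2 etG vtG adm x y etxy hG2).
split=> //; exact: (@sepG T k G1 G2 et vt s k2 h1 h2 dis c1 c2 etG vtG adm x y xy etxy).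
Qed.
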